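(* Let $N\ge1$, $m>1$, $\alpha,\beta\in\mathbb R$ with $N+\alpha-m>0$ and $\beta-\alpha+1>0$; let $s_0\ge0$, $\lambda>0$ and $$m-1<\wp<m^*_{\alpha,\beta}-1,\qquad m^*_{\alpha,\beta}=\frac{m(N+\beta)}{N+\alpha-m}.$$ Then every positive solution $u$ of $$-(r^{N+\alpha-1}|u'(r)|^{m-2}u'(r))'=\lambda r^{N+\beta-1}u^{\wp}(r),\ r\in(s_0,\infty),\qquad u(s_0)=1,\quad u'(s_0)\le0,$$ satisfies $\lim_{r\to\infty}r^{N+\beta}u^{\wp+1}(r)=0$. In particular $\lim_{r\to\infty}u(r)=0$.
   Context: A positive solution is a positive function $u\in C^1$ on $[s_0,\infty)$ satisfying the differential equation on $(s_0,\infty)$ (with $r^{N+\alpha-1}|u'|^{m-2}u'$ of class $C^1$ there) together with the initial conditions. *)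

(* Defs.v *)
From Stdlib Require Import Reals.
From Coquelicot Require Import Coquelicot.
Open Scope R_scope.

(* phi_m(t) = |t|^(m-2) t, with the continuous convention phi_m(0) = 0
   (needed when 1 < m < 2, where |0|^(m-2) is undefined). *)
Definition phi_m (m t : R) : R :=
  if Req_EM_T t 0 then 0
  else if Rlt_dec 0 t then Rpower t (m - 1) else - Rpower (- t) (m - 1).

Definition mstar (N : nat) (m alpha beta : R) : R :=
  m * (INR N + beta) / (INR N + alpha - m).

Definition positive_solution (N : nat) (m alpha beta lambda p s0 : R)
  (u : R -> R) : Prop :=
  exists du : R -> R,
    (forall r, s0 <= r -> 0 < u r) /\
    (forall r, s0 < r -> is_derive u r (du r)) /\
    filterlim (fun h => (u (s0 + h) - u s0) / h) (at_right 0) (locally (du s0)) /\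
    (forall r, s0 < r -> continuous du r) /\
    filterlim du (at_right s0) (locally (du s0)) /\
    (forall r, s0 < r ->
       is_derive (fun t => Rpower t (INR N + alpha - 1) * phi_m m (du t)) r
                 (- (lambda * Rpower r (INR N + beta - 1) * Rpower (u r) p))) /\
    u s0 = 1 /\ du s0 <= 0.

(* Main.v *)
Require Import Defs.
From Stdlib Require Import Reals Lra.
From Coquelicot Require Import Coquelicot.
Open Scope R_scope.

Lemma der_eq (f : R -> R) (x l l' : R) : is_derive f x l -> l = l' -> is_derive f x l'.
Proof. intros H ->; exact H. Qed.

Lemma der_mult (f g : R -> R) (x a b : R) : is_derive f x a -> is_derive g x b ->
  is_derive (fun t => f t * g t) x (a * g x + f x * b).
Proof.
  intros Hf Hg. apply is_derive_Reals. apply is_derive_Reals in Hf, Hg.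
  exact (derivable_pt_lim_mult f g x a b Hf Hg).
Qed.

Lemma der_plus (f g : R -> R) (x a b : R) : is_derive f x a -> is_derive g x b ->
  is_derive (fun t => f t + g t) x (a + b).
Proof.
  intros Hf Hg. apply is_derive_Reals. apply is_derive_Reals in Hf, Hg.
  exact (derivable_pt_lim_plus f g x a b Hf Hg).
Qed.

Lemma der_const (c x : R) : is_derive (fun _ => c) x 0.
Proof. apply is_derive_Reals. apply derivable_pt_lim_const. Qed.

Lemma der_pow (x e : R) : 0 < x -> is_derive (fun t => Rpower t e) x (e * Rpower x (e - 1)).
Proof. intros H. apply is_derive_Reals. now apply derivable_pt_lim_power. Qed.

Lemma der_powcomp (f : R -> R) (x a e : R) : 0 < f x -> is_derive f x a ->
  is_derive (fun t => Rpower (f t) e) x (e * Rpower (f x) (e - 1) * a).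
Proof.
  intros Hp Hf. apply is_derive_Reals. apply is_derive_Reals in Hf.
  pose proof (derivable_pt_lim_comp f (fun t => Rpower t e) x a _ Hf (derivable_pt_lim_power (f x) e Hp)) as K.
  exact K.
Qed.

Lemma mono_le (f df : R -> R) (x y : R) : x <= y ->
  (forall t, x <= t <= y -> is_derive f t (df t)) ->
  (forall t, x <= t <= y -> df t <= 0) -> f y <= f x.
Proof.
  intros Hxy Hd Hs. destruct (Req_dec x y) as [<-|Hne]; [lra|].
  destruct (MVT_gen f x y df) as [c [Hc Heq]].
  - intros t Ht. apply Hd. rewrite Rmin_left, Rmax_right in Ht; lra.
  - intros t Ht. rewrite Rmin_left, Rmax_right in Ht by lra.
    apply derivable_continuous_pt. exists (df t). apply is_derive_Reals. apply Hd. lra.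
  - rewrite Rmin_left, Rmax_right in Hc by lra.
    assert (df c <= 0) by (apply Hs; lra).
    assert (df c * (y - x) <= 0).
    { apply Rmult_le_0_r; lra. }
    lra.
Qed.

Lemma mono_lt (f df : R -> R) (x y : R) : x < y ->
  (forall t, x <= t <= y -> is_derive f t (df t)) ->
  (forall t, x <= t <= y -> df t < 0) -> f y < f x.
Proof.
  intros Hxy Hd Hs.
  destruct (MVT_gen f x y df) as [c [Hc Heq]].
  - intros t Ht. apply Hd. rewrite Rmin_left, Rmax_right in Ht; lra.
  - intros t Ht. rewrite Rmin_left, Rmax_right in Ht by lra.
    apply derivable_continuous_pt. exists (df t). apply is_derive_Reals. apply Hd. lra.
  - rewrite Rmin_left, Rmax_right in Hc by lra.
    assert (df c < 0) by (apply Hs; lra).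
    assert (df c * (y - x) < 0).
    { apply Rmult_neg_pos; lra. }
    lra.
Qed.

Lemma Rpower_pos x e : 0 < Rpower x e.
Proof. unfold Rpower. apply exp_pos. Qed.

Lemma half_lemma e s r : 0 < e -> 0 < s -> Rpower 2 (/ e) * s <= r ->
  Rpower s e <= Rpower r e / 2.
Proof.
  intros He Hs Hr.
  assert (H2 : Rpower (Rpower 2 (/ e) * s) e = 2 * Rpower s e).
  { rewrite <- Rpower_mult_distr by (try apply Rpower_pos; lra).
    rewrite Rpower_mult. replace (/ e * e) with 1 by (field; lra).
    rewrite Rpower_1 by lra. ring. }
  assert (Rpower (Rpower 2 (/ e) * s) e <= Rpower r e).
  { apply Rle_Rpower_l; [lra|]. split; [|exact Hr].
    apply Rmult_lt_0_compat; [apply Rpower_pos|lra]. }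
  lra.
Qed.

Lemma Rpower_ge1 x : 0 <= x -> 1 <= Rpower 2 x.
Proof.
  intros H. rewrite <- (Rpower_O 2) by lra. apply Rle_Rpower; lra.
Qed.

Lemma lim0 e eps : 0 < e -> 0 < eps -> exists M, 0 < M /\ forall r, M < r -> Rpower r (- e) < eps.
Proof.
  intros He Heps. exists (Rpower (/ eps) (/ e) + 1). split.
  { pose proof (Rpower_pos (/eps) (/e)). lra. }
  intros r Hr.
  assert (H1 : Rpower (Rpower (/ eps) (/ e)) e < Rpower r e).
  { apply Rlt_Rpower_l; [lra|]. pose proof (Rpower_pos (/eps) (/e)). lra. }
  rewrite Rpower_mult in H1. replace (/ e * e) with 1 in H1 by (field; lra).
  rewrite Rpower_1 in H1 by (apply Rinv_0_lt_compat; lra).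
  rewrite Rpower_Ropp.
  pose proof (Rpower_pos r e).
  apply (Rmult_lt_reg_l (Rpower r e)); [lra|].
  rewrite Rinv_r by lra.
  apply (Rmult_lt_reg_l (/ eps)); [apply Rinv_0_lt_compat; lra|].
  replace (/ eps * (Rpower r e * eps)) with (Rpower r e) by (field; lra).
  lra.
Qed.

Lemma ball_R (x e y : R) : Rabs (y - x) < e -> ball x e y.
Proof. intros H. exact H. Qed.
Lemma ball_R' (x e y : R) : ball x e y -> Rabs (y - x) < e.
Proof. intros H. exact H. Qed.

Lemma phi_neg m x : x < 0 -> phi_m m x = - Rpower (- x) (m - 1).
Proof. intros H. unfold phi_m. destruct (Req_EM_T x 0); [lra|]. destruct (Rlt_dec 0 x); [lra|]. reflexivity. Qed.
Lemma phi_pos m x : 0 < x -> phi_m m x = Rpower x (m - 1).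
Proof. intros H. unfold phi_m. destruct (Req_EM_T x 0); [lra|]. destruct (Rlt_dec 0 x); [|lra]. reflexivity. Qed.
Lemma phi_sign_neg m x : phi_m m x < 0 -> x < 0.
Proof. intros H. unfold phi_m in H. destruct (Req_EM_T x 0); [lra|]. destruct (Rlt_dec 0 x).
  - pose proof (Rpower_pos x (m-1)); lra.
  - lra. Qed.
Lemma phi_sign_pos m x : 0 < phi_m m x -> 0 < x.
Proof. intros H. unfold phi_m in H. destruct (Req_EM_T x 0); [lra|]. destruct (Rlt_dec 0 x).
  - lra.
  - pose proof (Rpower_pos (-x) (m-1)); lra. Qed.

Lemma Rpower_inv_le y z e : 0 < e -> 0 < y -> 0 < z -> z <= Rpower y e -> Rpower z (/ e) <= y.
Proof.
  intros He Hy Hz H.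
  assert (Rpower z (/ e) <= Rpower (Rpower y e) (/ e)).
  { apply Rle_Rpower_l. left; apply Rinv_0_lt_compat; lra. lra. }
  rewrite Rpower_mult in H0. replace (e * / e) with 1 in H0 by (field; lra).
  rewrite Rpower_1 in H0 by lra. exact H0.
Qed.

Lemma der_minus (f g : R -> R) (x a b : R) : is_derive f x a -> is_derive g x b ->
  is_derive (fun t => f t - g t) x (a - b).
Proof.
  intros Hf Hg. apply is_derive_Reals. apply is_derive_Reals in Hf, Hg.
  exact (derivable_pt_lim_minus f g x a b Hf Hg).
Qed.

Lemma step_neg (A m s0 : R) (F du dF : R -> R) :
  0 <= s0 -> 0 < A -> 1 < m ->
  (forall t, F t = Rpower t A * phi_m m (du t)) ->
  (forall r, s0 < r -> is_derive F r (dF r)) -> (forall r, s0 < r -> dF r < 0) ->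
  filterlim du (at_right s0) (locally (du s0)) -> du s0 <= 0 ->
  forall r, s0 < r -> du r < 0.
Proof.
  intros Hs0 HA Hm HFd HF HdF Hlim Hdu0 r Hr.
  assert (HFr : F r < 0).
  { destruct (Rlt_or_le (F r) 0) as [H|Hge]; [exact H|exfalso].
    set (r' := (s0 + r) / 2).
    assert (Hlt : F r < F r').
    { apply (mono_lt F dF r' r); [unfold r'; lra| |].
      - intros t Ht. apply HF. unfold r' in Ht; lra.
      - intros t Ht. apply HdF. unfold r' in Ht; lra. }
    set (d := F r'). assert (Hd : 0 < d) by (unfold d; lra).
    set (eta := Rpower (d / Rpower r' A) (/ (m - 1))).
    assert (Heta : 0 < eta) by apply Rpower_pos.
    assert (Hall : forall t, s0 < t <= r' -> eta <= du t).
    { intros t Ht.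
      assert (H1 : d <= F t).
      { destruct (Req_dec t r') as [->|Hne]; [unfold d; lra|].
        left. apply (mono_lt F dF t r'); [lra| |].
        - intros t' Ht'. apply HF. lra.
        - intros t' Ht'. apply HdF. lra. }
      rewrite HFd in H1.
      assert (Hpt : 0 < Rpower t A) by apply Rpower_pos.
      assert (Hle : Rpower t A <= Rpower r' A).
      { apply Rle_Rpower_l; lra. }
      assert (Hphi : 0 < phi_m m (du t)).
      { destruct (Rlt_or_le 0 (phi_m m (du t))) as [h|h]; [exact h|].
        assert (Rpower t A * phi_m m (du t) <= 0).
        { apply Rmult_le_0_l; lra. } lra. }
      pose proof (phi_sign_pos m _ Hphi) as Hdup.
      rewrite phi_pos in H1 by exact Hdup. rewrite phi_pos in Hphi by exact Hdup.
      unfold eta. apply Rpower_inv_le; [lra|exact Hdup| |].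
      + apply Rdiv_lt_0_compat; [lra|apply Rpower_pos].
      + pose proof (Rpower_pos r' A).
        apply (Rmult_le_reg_l (Rpower r' A)); [lra|].
        replace (Rpower r' A * (d / Rpower r' A)) with d by (field; lra).
        apply Rle_trans with (1 := H1).
        apply Rmult_le_compat_r; lra. }
    pose proof (proj1 (filterlim_locally (F := at_right s0) (U := R_UniformSpace) du (du s0)) Hlim) as Hlim2. clear Hlim. rename Hlim2 into Hlim.
    destruct (Hlim (mkposreal eta Heta)) as [e He]. simpl in He.
    set (t := s0 + Rmin e (r' - s0) / 2).
    assert (Hm1 : 0 < Rmin e (r' - s0)).
    { apply Rmin_pos; [apply cond_pos|unfold r'; lra]. }
    assert (Hm2 : Rmin e (r' - s0) <= e) by apply Rmin_l.
    assert (Hm3 : Rmin e (r' - s0) <= r' - s0) by apply Rmin_r.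
    assert (Hb : ball s0 e t).
    { apply ball_R. unfold t. rewrite Rabs_pos_eq; lra. }
    specialize (He t Hb). assert (Ht : s0 < t) by (unfold t; lra).
    specialize (He Ht). apply ball_R' in He.
    assert (Ht2 : t <= r') by (unfold t; lra). specialize (Hall t (conj Ht Ht2)).
    apply Rabs_def2 in He. simpl in He. lra. }
  rewrite HFd in HFr.
  assert (Hpt : 0 < Rpower r A) by apply Rpower_pos.
  apply (phi_sign_neg m).
  destruct (Rlt_or_le (phi_m m (du r)) 0) as [h|h]; [exact h|].
  assert (0 <= Rpower r A * phi_m m (du r)) by (apply Rmult_le_pos; lra). lra.
Qed.

Lemma stepG (B lam p s1 : R) (F u du : R -> R) :
  0 < s1 -> 0 < B + 1 -> 0 < lam -> 0 < p ->
  (forall r, s1 <= r -> is_derive F r (-(lam * Rpower r B * Rpower (u r) p))) ->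
  (forall r, s1 <= r -> is_derive u r (du r)) -> (forall r, s1 <= r -> du r < 0) ->
  (forall r, s1 <= r -> 0 < u r) ->
  forall r, s1 <= r ->
    F r + lam / (B + 1) * Rpower (u r) p * (Rpower r (B + 1) - Rpower s1 (B + 1)) <= F s1.
Proof.
  intros Hs1 HB Hl Hp HF Hu Hdu Hpos r Hr.
  set (G := fun t => F t + lam / (B + 1) * Rpower (u t) p * (Rpower t (B + 1) - Rpower s1 (B + 1))).
  assert (HG : G s1 = F s1) by (unfold G; ring).
  change (G r <= F s1). rewrite <- HG.
  apply (mono_le G (fun t => lam / (B + 1) * (p * Rpower (u t) (p - 1) * du t) * (Rpower t (B + 1) - Rpower s1 (B + 1)))); [exact Hr| |].
  - intros t Ht. unfold G.
    eapply der_eq.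
    + apply (der_plus F (fun t => lam / (B + 1) * Rpower (u t) p * (Rpower t (B + 1) - Rpower s1 (B + 1)))).
      * apply HF. lra.
      * apply (der_mult (fun t => lam / (B + 1) * Rpower (u t) p) (fun t => Rpower t (B + 1) - Rpower s1 (B + 1))).
        -- apply (der_mult (fun _ => lam / (B + 1)) (fun t => Rpower (u t) p)).
           ++ apply der_const.
           ++ apply der_powcomp; [apply Hpos; lra| apply Hu; lra].
        -- apply (der_minus (fun t => Rpower t (B + 1)) (fun _ => Rpower s1 (B + 1))).
           ++ apply der_pow. lra.
           ++ apply der_const.
    + replace (B + 1 - 1) with B by ring. field. lra.
  - intros t Ht.
    assert (h1 : Rpower s1 (B + 1) <= Rpower t (B + 1)) by (apply Rle_Rpower_l; lra).
    assert (h2 : 0 < p * Rpower (u t) (p - 1)) by (apply Rmult_lt_0_compat; [lra|apply Rpower_pos]).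
    assert (h3 : p * Rpower (u t) (p - 1) * du t < 0) by (apply Rmult_pos_neg; [lra|apply Hdu; lra]).
    assert (h4 : lam / (B + 1) * (p * Rpower (u t) (p - 1) * du t) < 0).
    { apply Rmult_pos_neg; [apply Rdiv_lt_0_compat; lra|lra]. }
    apply Rmult_le_0_r; lra.
Qed.

Lemma stepH (c1 q g R0 : R) (u du : R -> R) :
  0 < R0 -> 0 < c1 -> 1 < q -> 0 < g ->
  (forall r, R0 <= r -> is_derive u r (du r)) ->
  (forall r, R0 <= r -> 0 < u r) ->
  (forall r, R0 <= r -> c1 * Rpower (u r) q * Rpower r g <= - du r) ->
  forall r, R0 <= r ->
    c1 * (q - 1) / (g + 1) * Rpower r (g + 1) - Rpower (u r) (1 - q)
    <= c1 * (q - 1) / (g + 1) * Rpower R0 (g + 1) - Rpower (u R0) (1 - q).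
Proof.
  intros HR0 Hc1 Hq Hg Hu Hpos Hineq r Hr.
  set (c2 := c1 * (q - 1) / (g + 1)).
  apply (mono_le (fun t => c2 * Rpower t (g + 1) - Rpower (u t) (1 - q))
     (fun t => c1 * (q - 1) * Rpower t g + (q - 1) * (Rpower (u t) (- q) * du t))); [exact Hr| |].
  - intros t Ht. eapply der_eq.
    + apply (der_minus (fun t => c2 * Rpower t (g + 1)) (fun t => Rpower (u t) (1 - q))).
      * apply (der_mult (fun _ => c2) (fun t => Rpower t (g + 1))).
        -- apply der_const.
        -- apply der_pow. lra.
      * apply der_powcomp; [apply Hpos; lra|apply Hu; lra].
    + replace (g + 1 - 1) with g by ring. replace (1 - q - 1) with (- q) by ring.
      unfold c2. field. lra.
  - intros t Ht. simpl.
    specialize (Hineq t ltac:(lra)).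
    pose proof (Hpos t ltac:(lra)) as hu.
    assert (E : Rpower (u t) (- q) * Rpower (u t) q = 1).
    { rewrite Rpower_Ropp. apply Rinv_l. pose proof (Rpower_pos (u t) q). lra. }
    assert (h : c1 * Rpower t g <= Rpower (u t) (- q) * (- du t)).
    { pose proof (Rpower_pos (u t) (- q)).
      apply Rle_trans with (Rpower (u t) (- q) * (c1 * Rpower (u t) q * Rpower t g)).
      - right. replace (Rpower (u t) (- q) * (c1 * Rpower (u t) q * Rpower t g))
          with ((Rpower (u t) (- q) * Rpower (u t) q) * (c1 * Rpower t g)) by ring.
        rewrite E. ring.
      - apply Rmult_le_compat_l; lra. }
    assert (h2 : 0 <= (q - 1) * (Rpower (u t) (- q) * (- du t) - c1 * Rpower t g)).
    { apply Rmult_le_pos; lra. }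
    lra.
Qed.

Lemma invert_bound (w c3 x e : R) : 0 < c3 -> 0 < x -> 0 < e -> c3 * x <= w ->
  Rpower w (- e) <= Rpower c3 (- e) * Rpower x (- e).
Proof.
  intros Hc Hx He H.
  rewrite Rpower_mult_distr by lra.
  rewrite !Rpower_Ropp.
  assert (0 < c3 * x) by (apply Rmult_lt_0_compat; lra).
  apply Rinv_le_contravar; [apply Rpower_pos|].
  apply Rle_Rpower_l; lra.
Qed.

Lemma decay_bound (N : nat) (m alpha beta s0 lambda p : R) (u : R -> R) :
  (1 <= N)%nat -> 1 < m ->
  0 < INR N + alpha - m -> 0 < beta - alpha + 1 ->
  0 <= s0 -> 0 < lambda ->
  m - 1 < p ->
  positive_solution N m alpha beta lambda p s0 u ->
  exists C R1, 0 < C /\ 0 < R1 /\ forall r, R1 <= r ->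
    0 < u r /\ u r <= C * Rpower r (- (((INR N + beta - 1 + 1 - (INR N + alpha - 1)) * / (m - 1) + 1) * / (p * / (m - 1) - 1))).
Proof.
  intros HN Hm HNa Hba Hs0 Hl Hp1 [du [Hpos [Hder [_ [_ [Hdu0 [HF [_ Hdus0]]]]]]]].
  set (A := INR N + alpha - 1) in *.
  set (B := INR N + beta - 1) in *.
  assert (HA : 0 < A) by (unfold A; lra).
  assert (HB : 0 < B + 1) by (unfold A, B in *; lra).
  assert (HBA : 0 < B + 1 - A) by (unfold A, B in *; lra).
  set (F := fun t => Rpower t A * phi_m m (du t)) in *.
  assert (Hneg : forall r, s0 < r -> du r < 0).
  { apply (step_neg A m s0 F du (fun r => -(lambda * Rpower r B * Rpower (u r) p)));
      try assumption; try lra.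
    - intros t; reflexivity.
    - intros r Hr. pose proof (Rpower_pos r B). pose proof (Rpower_pos (u r) p).
      assert (0 < lambda * Rpower r B * Rpower (u r) p) by
        (apply Rmult_lt_0_compat; [apply Rmult_lt_0_compat|]; lra). lra. }
  set (s1 := s0 + 1).
  assert (Hs1 : 0 < s1) by (unfold s1; lra).
  assert (HG := stepG B lambda p s1 F u du Hs1 HB Hl ltac:(lra)
    ltac:(intros r Hr; apply HF; unfold s1 in Hr; lra)
    ltac:(intros r Hr; apply Hder; unfold s1 in Hr; lra)
    ltac:(intros r Hr; apply Hneg; unfold s1 in Hr; lra)
    ltac:(intros r Hr; apply Hpos; unfold s1 in Hr; lra)).
  assert (HFs1 : F s1 < 0).
  { unfold F. rewrite phi_neg by (apply Hneg; unfold s1; lra).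
    pose proof (Rpower_pos s1 A). pose proof (Rpower_pos (- du s1) (m - 1)).
    assert (0 < Rpower s1 A * Rpower (- du s1) (m - 1)) by (apply Rmult_lt_0_compat; lra).
    lra. }
  set (R0 := Rpower 2 (/ (B + 1)) * s1).
  assert (HR0s1 : s1 <= R0).
  { unfold R0. pose proof (Rpower_ge1 (/ (B + 1)) ltac:(left; apply Rinv_0_lt_compat; lra)).
    nra. }
  assert (HR0 : 0 < R0) by lra.
  set (c0 := lambda / (2 * (B + 1))).
  assert (Hc0 : 0 < c0) by (unfold c0; apply Rdiv_lt_0_compat; lra).
  set (c1 := Rpower c0 (/ (m - 1))).
  set (q := p * / (m - 1)).
  set (g := (B + 1 - A) * / (m - 1)).
  assert (Hc1 : 0 < c1) by apply Rpower_pos.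
  assert (Hq : 1 < q).
  { unfold q. apply (Rmult_lt_reg_r (m - 1)); [lra|].
    rewrite Rmult_assoc, Rinv_l by lra. lra. }
  assert (Hg : 0 < g) by (unfold g; apply Rmult_lt_0_compat; [lra|apply Rinv_0_lt_compat; lra]).
  assert (Hdub : forall r, R0 <= r -> c1 * Rpower (u r) q * Rpower r g <= - du r).
  { intros r Hr.
    assert (Hr0 : s0 < r) by (unfold s1 in *; lra).
    specialize (HG r ltac:(lra)).
    pose proof (half_lemma (B + 1) s1 r HB Hs1 Hr) as Hh.
    pose proof (Hneg r Hr0) as Hd. pose proof (Hpos r ltac:(lra)) as Hu.
    assert (EF : F r = - (Rpower r A * Rpower (- du r) (m - 1))).
    { unfold F. rewrite (phi_neg m (du r)) by exact Hd. ring. }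
    pose proof (Rpower_pos (u r) p) as Hup.
    assert (K1 : c0 * Rpower (u r) p * Rpower r (B + 1) <= Rpower r A * Rpower (- du r) (m - 1)).
    { assert (lambda / (B + 1) * Rpower (u r) p * (Rpower r (B + 1) / 2) <=
              lambda / (B + 1) * Rpower (u r) p * (Rpower r (B + 1) - Rpower s1 (B + 1))).
      { apply Rmult_le_compat_l.
        - apply Rmult_le_pos; [left; apply Rdiv_lt_0_compat|]; lra.
        - lra. }
      unfold c0. replace (lambda / (2 * (B + 1)) * Rpower (u r) p * Rpower r (B + 1)) with
        (lambda / (B + 1) * Rpower (u r) p * (Rpower r (B + 1) / 2)) by (field; lra).
      lra. }
    assert (E1 : Rpower r (B + 1) = Rpower r A * Rpower r (B + 1 - A)).
    { rewrite <- Rpower_plus. f_equal. ring. }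
    rewrite E1 in K1.
    assert (K2 : c0 * Rpower (u r) p * Rpower r (B + 1 - A) <= Rpower (- du r) (m - 1)).
    { pose proof (Rpower_pos r A).
      apply (Rmult_le_reg_l (Rpower r A)); [lra|].
      replace (Rpower r A * (c0 * Rpower (u r) p * Rpower r (B + 1 - A))) with
        (c0 * Rpower (u r) p * (Rpower r A * Rpower r (B + 1 - A))) by ring. exact K1. }
    assert (Z1 : 0 < m - 1) by lra. assert (Z2 : 0 < - du r) by lra.
    assert (Z3 : 0 < c0 * Rpower (u r) p * Rpower r (B + 1 - A)) by
      (apply Rmult_lt_0_compat; [apply Rmult_lt_0_compat; [lra|apply Rpower_pos]|apply Rpower_pos]).
    assert (K3 := Rpower_inv_le (- du r) _ (m - 1) Z1 Z2 Z3 K2).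
    rewrite <- !Rpower_mult_distr in K3 by (try apply Rmult_lt_0_compat; try apply Rpower_pos; lra).
    rewrite <- (Rpower_mult_distr c0 (Rpower (u r) p)) in K3 by (try apply Rpower_pos; lra).
    rewrite !Rpower_mult in K3. exact K3. }
  assert (HH := stepH c1 q g R0 u du HR0 Hc1 Hq Hg
     ltac:(intros r Hr; apply Hder; unfold s1 in *; lra)
     ltac:(intros r Hr; apply Hpos; unfold s1 in *; lra) Hdub).
  set (c2 := c1 * (q - 1) / (g + 1)) in *.
  assert (Hc2 : 0 < c2) by (unfold c2; apply Rdiv_lt_0_compat; [apply Rmult_lt_0_compat|]; lra).
  set (R1 := Rpower 2 (/ (g + 1)) * R0).
  assert (HR1R0 : R0 <= R1).
  { unfold R1. pose proof (Rpower_ge1 (/ (g + 1)) ltac:(left; apply Rinv_0_lt_compat; lra)).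
    nra. }
  set (e := / (q - 1)).
  assert (He : 0 < e) by (unfold e; apply Rinv_0_lt_compat; lra).
  exists (Rpower (c2 / 2) (- e)), R1. split; [apply Rpower_pos|]. split; [lra|].
  intros r Hr. split; [apply Hpos; unfold s1 in *; lra|].
  specialize (HH r ltac:(lra)).
  pose proof (half_lemma (g + 1) R0 r ltac:(lra) HR0 Hr) as Hh.
  pose proof (Rpower_pos (u R0) (1 - q)).
  assert (Hw : c2 / 2 * Rpower r (g + 1) <= Rpower (u r) (1 - q)).
  { assert (c2 * Rpower R0 (g + 1) <= c2 * (Rpower r (g + 1) / 2)) by (apply Rmult_le_compat_l; lra).
    lra. }
  pose proof (invert_bound _ (c2 / 2) (Rpower r (g + 1)) e ltac:(lra) ltac:(apply Rpower_pos) He Hw) as K.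
  rewrite !Rpower_mult in K.
  assert (Eu : Rpower (u r) ((1 - q) * - e) = u r).
  { replace ((1 - q) * - e) with 1 by (unfold e; field; lra). apply Rpower_1. apply Hpos; unfold s1 in *; lra. }
  rewrite Eu in K.
  replace ((g + 1) * - e) with (- ((g + 1) * e)) in K by ring.
  exact K.
Qed.

Theorem corollary3p1 (N : nat) (m alpha beta s0 lambda p : R) (u : R -> R) :
  (1 <= N)%nat -> 1 < m ->
  0 < INR N + alpha - m -> 0 < beta - alpha + 1 ->
  0 <= s0 -> 0 < lambda ->
  m - 1 < p -> p < mstar N m alpha beta - 1 ->
  positive_solution N m alpha beta lambda p s0 u ->
  filterlim (fun r => Rpower r (INR N + beta) * Rpower (u r) (p + 1))
            (Rbar_locally p_infty) (locally 0) /\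
  filterlim u (Rbar_locally p_infty) (locally 0).
Proof.
  intros HN Hm HNa Hba Hs0 Hl Hp1 Hp2 Hsol.
  destruct (decay_bound N m alpha beta s0 lambda p u HN Hm HNa Hba Hs0 Hl Hp1 Hsol)
    as [C [R1 [HC [HR1 Hb]]]].
  set (k := ((INR N + beta - 1 + 1 - (INR N + alpha - 1)) * / (m - 1) + 1) * / (p * / (m - 1) - 1)) in *.
  assert (Ek : k = (beta - alpha + m) / (p - m + 1)).
  { unfold k. field. split; lra. }
  assert (Hk : 0 < k) by (rewrite Ek; apply Rdiv_lt_0_compat; lra).
  set (kk := k * (p + 1) - (INR N + beta)).
  assert (Hkk : 0 < kk).
  { unfold kk. rewrite Ek.
    unfold mstar in Hp2.
    assert (H1 : (p + 1) * (INR N + alpha - m) < m * (INR N + beta)).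
    { assert (p + 1 < m * (INR N + beta) / (INR N + alpha - m)) by lra.
      apply (Rmult_lt_compat_r (INR N + alpha - m)) in H; [|lra].
      unfold Rdiv in H. rewrite Rmult_assoc, Rinv_l in H by lra. lra. }
    replace ((beta - alpha + m) / (p - m + 1) * (p + 1) - (INR N + beta)) with
      ((m * (INR N + beta) - (p + 1) * (INR N + alpha - m)) / (p - m + 1)) by (field; lra).
    apply Rdiv_lt_0_compat; lra. }
  split.
  - apply (proj2 (filterlim_locally (F := Rbar_locally p_infty) (U := R_UniformSpace) _ 0)).
    intros eps.
    set (D := Rpower C (p + 1)).
    assert (HD : 0 < D) by apply Rpower_pos.
    destruct (lim0 kk (eps / D) Hkk ltac:(apply Rdiv_lt_0_compat; [apply cond_pos|exact HD])) as [M [HM HM2]].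
    exists (Rmax R1 M). intros r Hr.
    assert (Hr1 : R1 < r) by (eapply Rle_lt_trans; [apply Rmax_l|exact Hr]).
    assert (Hr2 : M < r) by (eapply Rle_lt_trans; [apply Rmax_r|exact Hr]).
    destruct (Hb r ltac:(lra)) as [Hu Hub].
    apply ball_R. rewrite Rminus_0_r.
    pose proof (Rpower_pos r (INR N + beta)) as P1.
    pose proof (Rpower_pos (u r) (p + 1)) as P2.
    rewrite Rabs_pos_eq by (apply Rmult_le_pos; lra).
    assert (K1 : Rpower (u r) (p + 1) <= Rpower (C * Rpower r (- k)) (p + 1)).
    { apply Rle_Rpower_l; lra. }
    rewrite <- Rpower_mult_distr, Rpower_mult in K1 by (try apply Rpower_pos; lra).
    apply Rle_lt_trans with (Rpower r (INR N + beta) * (D * Rpower r (- k * (p + 1)))).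
    { apply Rmult_le_compat_l; [lra|exact K1]. }
    replace (Rpower r (INR N + beta) * (D * Rpower r (- k * (p + 1)))) with
      (D * (Rpower r (INR N + beta) * Rpower r (- k * (p + 1)))) by ring.
    rewrite <- Rpower_plus.
    replace (INR N + beta + - k * (p + 1)) with (- kk) by (unfold kk; ring).
    specialize (HM2 r Hr2).
    apply (Rmult_lt_compat_l D) in HM2; [|exact HD].
    replace (D * (eps / D)) with (pos eps) in HM2 by (field; lra).
    exact HM2.
  - apply (proj2 (filterlim_locally (F := Rbar_locally p_infty) (U := R_UniformSpace) _ 0)).
    intros eps.
    destruct (lim0 k (eps / C) Hk ltac:(apply Rdiv_lt_0_compat; [apply cond_pos|exact HC])) as [M [HM HM2]].
    exists (Rmax R1 M). intros r Hr.
    assert (Hr1 : R1 < r) by (eapply Rle_lt_trans; [apply Rmax_l|exact Hr]).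
    assert (Hr2 : M < r) by (eapply Rle_lt_trans; [apply Rmax_r|exact Hr]).
    destruct (Hb r ltac:(lra)) as [Hu Hub].
    apply ball_R. rewrite Rminus_0_r. rewrite Rabs_pos_eq by lra.
    specialize (HM2 r Hr2).
    apply (Rmult_lt_compat_l C) in HM2; [|exact HC].
    replace (C * (eps / C)) with (pos eps) in HM2 by (field; lra).
    lra.
Qed.
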